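(* Let $\mathcal{S}$ be a category with $\Delta_1^*\subset\mathcal{S}\subset\mathbf{Pos}$ subcategories and $\Delta_1^*$ wide in $\mathcal{S}$. The following are equivalent: (1) every $\mathcal{S}$-morphism maps each $1$-dimensional interval onto an interval; (2) $\mathcal{S}$ does not contain the diagonal $[1]\to[1]^2$, $x\mapsto(x,x)$.
   Context: $[1]=\{0<1\}$, $[1]^n$ the product poset with componentwise order ($[1]^0=[0]$). An interval in a poset $P$ is a non-empty subset $[x,z]_P=\{y:x\leq y\leq z\}$; a $1$-dimensional interval in $[1]^n$ is one isomorphic to $[1]$, i.e. $\{x,y\}$ with $x<y$ differing in exactly one coordinate. $\Delta_1^*$ is the smallest subcategory of $\mathbf{Set}$ containing all functions between $[0]$ and $[1]$ and closed under Cartesian products of functions; its objects are the $[1]^n$ and it is generated by cofaces and codegeneracies (coordinate projections). ''Wide'' means $\mathcal{S}$ has the same objects as $\Delta_1^*$. $\mathbf{Pos}$ is the category of posets and monotone functions. *)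

(* Defs.v *)
From mathcomp Require Import all_boot.
Set Implicit Arguments. Unset Strict Implicit. Unset Printing Implicit Defensive.

(* [1]^n, as boolean vectors indexed by 'I_n; [1]^0 is the one-point poset. *)
Definition cube (n : nat) := {ffun 'I_n -> bool}.

Definition cle n (x y : cube n) : bool := [forall i, x i ==> y i].

Definition monotone m n (f : {ffun cube m -> cube n}) : Prop :=
  forall x y, cle x y -> cle (f x) (f y).

Definition idmap n : {ffun cube n -> cube n} := [ffun x => x].
Definition compmap m n p (g : {ffun cube n -> cube p}) (f : {ffun cube m -> cube n})
  : {ffun cube m -> cube p} := [ffun x => g (f x)].

(* Cartesian product of maps, using [1]^m x [1]^m' = [1]^(m+m') *)
Definition prodmap m n m' n' (f : {ffun cube m -> cube n}) (g : {ffun cube m' -> cube n'})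
  : {ffun cube (m + m') -> cube (n + n')} :=
  [ffun x : cube (m + m') =>
     let x1 : cube m := [ffun i => x (lshift m' i)] in
     let x2 : cube m' := [ffun j => x (rshift m j)] in
     [ffun k : 'I_(n + n') => match split k with
                              | inl i => f x1 i
                              | inr j => g x2 j end]].

Inductive Delta1 : forall m n, {ffun cube m -> cube n} -> Prop :=
| D1_base m n (f : {ffun cube m -> cube n}) :
    m <= 1 -> n <= 1 -> monotone f -> Delta1 f
| D1_id n : Delta1 (idmap n)
| D1_comp m n p (g : {ffun cube n -> cube p}) (f : {ffun cube m -> cube n}) :
    Delta1 g -> Delta1 f -> Delta1 (compmap g f)
| D1_prod m n m' n' (f : {ffun cube m -> cube n}) (g : {ffun cube m' -> cube n'}) :
    Delta1 f -> Delta1 g -> Delta1 (prodmap f g).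

(* A wide subcategory S with Delta_1^* <= S <= Pos (objects are the [1]^n). *)
Definition intermediate_cat (S : forall m n, {ffun cube m -> cube n} -> Prop) : Prop :=
  [/\ (forall n, S n n (idmap n)),
      (forall m n p (g : {ffun cube n -> cube p}) (f : {ffun cube m -> cube n}),
          S n p g -> S m n f -> S m p (compmap g f)),
      (forall m n (f : {ffun cube m -> cube n}), Delta1 f -> S m n f) &
      (forall m n (f : {ffun cube m -> cube n}), S m n f -> monotone f)].

Definition interval n (x z : cube n) : {set cube n} := [set y | cle x y && cle y z].

Definition is_interval n (A : {set cube n}) : Prop :=
  exists x z, cle x z /\ A = interval x z.

Definition one_dim n (x y : cube n) : Prop :=
  cle x y /\ #|[set i | x i != y i]| = 1.

Definition diag : {ffun cube 1 -> cube 2} := [ffun x : cube 1 => [ffun _ : 'I_2 => x ord0]].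

(* Main.v *)
Require Import Defs.
From mathcomp Require Import all_boot.
Set Implicit Arguments. Unset Strict Implicit. Unset Printing Implicit Defensive.

Lemma cube0_eq (x y : cube 0) : x = y.
Proof. by apply/ffunP => -[]. Qed.

Lemma cle_refl n (x : cube n) : cle x x.
Proof. by apply/forallP => i; apply/implyP. Qed.

Lemma mono0l n (f : {ffun cube 0 -> cube n}) : monotone f.
Proof. by move=> x y _; rewrite (cube0_eq x y) cle_refl. Qed.

Lemma mono0r m (f : {ffun cube m -> cube 0}) : monotone f.
Proof. by move=> x y _; apply/forallP => -[]. Qed.

Lemma D1_bang n (f : {ffun cube n -> cube 0}) : Delta1 f.
Proof.
elim: n f => [|n IH] f; first by apply: D1_base => //; apply: mono0l.
have -> : f = prodmap ([ffun _ : cube 1 => f [ffun _ => false]] : {ffun cube 1 -> cube 0})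
             ([ffun _ : cube n => f [ffun _ => false]] : {ffun cube n -> cube 0}).
  by apply/ffunP => x; apply: cube0_eq.
apply: (@D1_prod 1 0 n 0); last exact: IH.
by apply: D1_base => //; apply: mono0r.
Qed.

Lemma D1_const n (p : cube n) : Delta1 ([ffun _ : cube 0 => p]).
Proof.
elim: n p => [|n IH] p; first by apply: D1_base => //; apply: mono0l.
have -> : [ffun _ : cube 0 => p] =
  prodmap ([ffun _ : cube 0 => [ffun _ : 'I_1 => p ord0]] : {ffun cube 0 -> cube 1})
          ([ffun _ : cube 0 => [ffun j => p (lift ord0 j)]] : {ffun cube 0 -> cube n}).
  apply/ffunP => x; apply/ffunP => t; rewrite !ffunE.
  case: splitP => [a Ha|b Hb]; rewrite !ffunE; congr (p _); apply/val_inj => //=.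
  by rewrite Ha; case: a Ha => -[].
apply: (@D1_prod 0 1 0 n); last exact: IH.
by apply: D1_base => //; apply: mono0l.
Qed.

Lemma D1_proj1 n (i : 'I_n) : Delta1 ([ffun z : cube n => [ffun _ : 'I_1 => z i]]).
Proof.
elim: n i => [|n IH] i; first by case: i.
case: (unliftP ord0 i) => [i'|] ->.
  have -> : [ffun z : cube n.+1 => [ffun _ : 'I_1 => z (lift ord0 i')]] =
    prodmap ([ffun _ : cube 1 => [ffun i:'I_0 => false]] : {ffun cube 1 -> cube 0})
            ([ffun z : cube n => [ffun _ : 'I_1 => z i']]).
    apply/ffunP => x; apply/ffunP => t; rewrite !ffunE.
    case: splitP => [a Ha|b Hb]; first by case: a Ha.
    by rewrite !ffunE; congr (x _); apply/val_inj.
  by apply: (@D1_prod 1 0 n 1); [apply: D1_base => //; apply: mono0r | exact: IH].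
have -> : [ffun z : cube n.+1 => [ffun _ : 'I_1 => z ord0]] =
  prodmap (idmap 1) ([ffun _ : cube n => [ffun i:'I_0 => false]] : {ffun cube n -> cube 0}).
  apply/ffunP => x; apply/ffunP => t; rewrite !ffunE.
  case: splitP => [a Ha|b Hb]; last by case: b Hb.
  by rewrite !ffunE; congr (x _); apply/val_inj => /=; case: a Ha => -[].
by apply: (@D1_prod 1 1 n 0); [apply: D1_id | apply: D1_bang].
Qed.

Definition proj2f n (i j : 'I_n) : {ffun cube n -> cube 2} :=
  [ffun z : cube n => [ffun t : 'I_2 => if t == ord0 then z i else z j]].

Lemma D1_proj2 n (i j : 'I_n) : i < j -> Delta1 (proj2f i j).
Proof.
elim: n i j => [|n IH] i j lij; first by case: i lij.
case: (unliftP ord0 j) lij => [j'|] -> lij; last by rewrite ltn0 in lij.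
case: (unliftP ord0 i) lij => [i'|] -> lij.
  have -> : proj2f (lift ord0 i') (lift ord0 j') =
    prodmap ([ffun _ : cube 1 => [ffun i:'I_0 => false]] : {ffun cube 1 -> cube 0})
            (proj2f i' j').
    apply/ffunP => x; apply/ffunP => t; rewrite !ffunE.
    case: splitP => [a Ha|b Hb]; first by case: a Ha.
    have -> : t = b by apply/val_inj.
    by rewrite !ffunE; case: ifP => _; congr (x _); apply/val_inj.
  by apply: (@D1_prod 1 0 n 2); [apply: D1_base => //; apply: mono0r | apply: IH].
have -> : proj2f ord0 (lift ord0 j') =
  prodmap (idmap 1) ([ffun z : cube n => [ffun _ : 'I_1 => z j']]).
  apply/ffunP => x; apply/ffunP => t; rewrite !ffunE.
  case: splitP => [a Ha|b Hb].
    have -> : t == ord0 by apply/eqP/val_inj; rewrite /= Ha; case: a Ha => -[].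
    by rewrite !ffunE; congr (x _); apply/val_inj => /=; case: a Ha => -[].
  have -> : (t == ord0) = false by apply/negbTE; rewrite -val_eqE /= Hb.
  by rewrite !ffunE; congr (x _); apply/val_inj.
by apply: (@D1_prod 1 1 n 1); [apply: D1_id | apply: D1_proj1].
Qed.

Definition cofacef m (k : 'I_m) (x : cube m) : {ffun cube 1 -> cube m} :=
  [ffun b : cube 1 => [ffun t => if t == k then b ord0 else x t]].

Lemma D1_coface m (k : 'I_m) (x : cube m) : Delta1 (cofacef k x).
Proof.
elim: m k x => [|m IH] k x; first by case: k.
case: (unliftP ord0 k) => [k'|] ->.
  have -> : cofacef (lift ord0 k') x =
    prodmap ([ffun _ : cube 0 => [ffun _ : 'I_1 => x ord0]] : {ffun cube 0 -> cube 1})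
            (cofacef k' [ffun j => x (lift ord0 j)]).
    apply/ffunP => b; apply/ffunP => t; rewrite !ffunE.
    case: splitP => [a Ha|c Hc].
      case: eqP => [E|_].
        by have := ltn_ord a; rewrite -Ha E /= /bump leq0n add1n.
      by rewrite !ffunE; congr (x _); apply/val_inj => /=; case: a Ha => -[].
    rewrite !ffunE.
    case: eqP => [E|NE]; case: eqP => [E'|NE'].
    - by congr (b _); apply/val_inj.
    - by case: NE'; apply/val_inj; move: Hc; rewrite E /= => -[].
    - by case: NE; apply/val_inj; rewrite /= Hc E'.
    by congr (x _); apply/val_inj.
  by apply: (@D1_prod 0 1 1 m); [apply: D1_const | apply: IH].
have -> : cofacef ord0 x =
  prodmap (idmap 1) ([ffun _ : cube 0 => [ffun j => x (lift ord0 j)]] : {ffun cube 0 -> cube m}).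
  apply/ffunP => b; apply/ffunP => t; rewrite !ffunE.
  case: splitP => [a Ha|c Hc].
    case: eqP => [_|NE]; last by case: NE; apply/val_inj; rewrite /= Ha; case: a Ha => -[].
    by rewrite !ffunE; congr (b _); apply/val_inj => /=; case: a Ha => -[].
  case: eqP => [E|_]; first by move: Hc; rewrite E /=.
  by rewrite !ffunE; congr (x _); apply/val_inj.
by apply: (@D1_prod 1 1 0 m); [apply: D1_id | apply: D1_const].
Qed.

Lemma cleE n (x y : cube n) i : cle x y -> x i -> y i.
Proof. by move/forallP/(_ i)/implyP. Qed.

Lemma diff_le n (x y : cube n) i : cle x y -> x i != y i -> (x i = false /\ y i = true).
Proof. by move=> /(cleE (i:=i)); case: (x i); case: (y i) => // /(_ isT). Qed.

Lemma interval2 n (X Y : cube n) : cle X Y -> #|[set i | X i != Y i]| <= 1 ->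
  [set X; Y] = interval X Y.
Proof.
move=> XY /card_le1_eqP D1; apply/setP => z; rewrite !inE.
apply/idP/idP.
  by case/orP => /eqP ->; rewrite ?cle_refl XY.
case/andP => Xz zY; apply/negPn/negP; rewrite negb_or => /andP [nX nY].
have [i Hi] : exists i, z i != X i.
  by apply/existsP; apply: contraR nX; rewrite negb_exists => /forallP H;
     apply/eqP/ffunP => i; apply/eqP/negPn/H.
have [j Hj] : exists j, z j != Y j.
  by apply/existsP; apply: contraR nY; rewrite negb_exists => /forallP H;
     apply/eqP/ffunP => j; apply/eqP/negPn/H.
have [Xi zi] : X i = false /\ z i = true by apply: diff_le => //; rewrite eq_sym.
have Yi := cleE zY zi.
have [zj Yj] := diff_le (i:=j) zY Hj.
have Xj : X j = false by apply/negP => /(cleE Xz); rewrite zj.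
have eij : i = j by apply: D1; rewrite inE ?Xi ?Yi ?Xj ?Yj.
by move: zi; rewrite eij zj.
Qed.

Theorem mainTheorem6 (S : forall m n, {ffun cube m -> cube n} -> Prop) :
  intermediate_cat S ->
  ((forall m n (f : {ffun cube m -> cube n}) (x y : cube m),
       S m n f -> one_dim x y -> is_interval (f @: [set x; y]))
   <-> ~ S 1 2 diag).
Proof.
case=> Sid Scomp SD1 Smono; split.
  move=> H Sdiag.
  pose x0 : cube 1 := [ffun _ => false]; pose y0 : cube 1 := [ffun _ => true].
  have od : one_dim x0 y0.
    split; first by apply/forallP => i; rewrite !ffunE.
    rewrite (_ : [set i | _] = [set: 'I_1]) ?cardsT ?card_ord //.
    by apply/setP => i; rewrite !inE !ffunE.
  have [a [z [_ E]]] := H _ _ _ x0 y0 Sdiag od.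
  have p00 : diag x0 \in interval a z by rewrite -E imset_f // !inE eqxx.
  have p11 : diag y0 \in interval a z by rewrite -E imset_f // !inE eqxx orbT.
  pose q : cube 2 := [ffun i : 'I_2 => i == ord0].
  have : q \in interval a z.
    move: p00 p11; rewrite !inE => /andP [a0 _] /andP [_ z1].
    apply/andP; split; apply/forallP => i; apply/implyP.
      by move/(cleE a0); rewrite !ffunE.
    by move=> _; move: (cleE (i:=i) z1); rewrite !ffunE => ->.
  rewrite -E => /imsetP [w _ Hw].
  have h0 := congr1 (fun g : cube 2 => g ord0) Hw.
  have h1 := congr1 (fun g : cube 2 => g (lift ord0 ord0)) Hw.
  by move: h0 h1; rewrite /= !ffunE /= => <-.
move=> nD m n f x y Sf [cxy cd].
have mf : cle (f x) (f y) := Smono _ _ _ Sf _ _ cxy.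
have -> : f @: [set x; y] = [set f x; f y] by rewrite imsetU1 imset_set1.
case: (leqP #|[set i | f x i != f y i]| 1) => [le1|gt1].
  by exists (f x), (f y); split => //; apply: interval2.
exfalso; apply: nD.
move/eqP: cd => /cards1P [k Ek].
have [xk yk] : x k = false /\ y k = true.
  have : k \in [set i | x i != y i] by rewrite Ek inE.
  by rewrite inE => /(diff_le cxy).
have xyt : forall t, t != k -> x t = y t.
  move=> t tk; apply/eqP/negPn/negP => H.
  have : t \in [set i | x i != y i] by rewrite inE.
  by rewrite Ek inE (negbTE tk).
have Ecof : cofacef k x = [ffun b : cube 1 => if b ord0 then y else x].
  apply/ffunP => b; apply/ffunP => t; rewrite !ffunE.
  case: eqP => [->|/eqP tk]; first by case: (b ord0).
  by case: (b ord0) => //; apply: xyt.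
have [i [j [Di Dj lij]]] : exists i j, [/\ i \in [set i | f x i != f y i],
                                         j \in [set i | f x i != f y i] & i < j].
  have [i [j [Di Dj nij]]] := card_gt1P gt1.
  by case: (ltngtP i j) => [l|l|/val_inj e]; [exists i, j | exists j, i | rewrite e eqxx in nij].
move: Di Dj; rewrite !inE => /(diff_le mf) [fxi fyi] /(diff_le mf) [fxj fyj].
have := Scomp _ _ _ _ _ (SD1 _ _ _ (D1_proj2 lij))
          (Scomp _ _ _ _ _ Sf (SD1 _ _ _ (D1_coface k x))).
congr (S _ _ _).
apply/ffunP => b; apply/ffunP => t; rewrite Ecof !ffunE.
by case: (b ord0); case: ifP.
Qed.
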